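(* Let $P$ be the set of $n\geq 3$ points equally spaced on the unit circle. Every $t$-spanner on $P$ with $t<2$ that has tree-width $2$ is plane.
   Context: A $t$-spanner on $P$ is a graph with vertex set $P$, edges weighted by Euclidean distance, such that for all $p\neq p'\in P$ the shortest-path distance between $p$ and $p'$ is at most $t$ times their Euclidean distance. Plane means the straight-line drawing with vertices at the points of $P$ has no edge crossings. *)

(* Defs.v *)
From Stdlib Require Import Reals.
From mathcomp Require Import all_boot.
Set Implicit Arguments. Unset Strict Implicit. Unset Printing Implicit Defensive.

Local Open Scope R_scope.

Definition pt := (R * R)%type.

Definition eucl (p q : pt) : R :=
  sqrt ((fst p - fst q) ^ 2 + (snd p - snd q) ^ 2).

Definition circ_pt (n : nat) (k : 'I_n) : pt :=
  (cos (2 * PI * INR k / INR n), sin (2 * PI * INR k / INR n)).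

Definition simple_graph (n : nat) (e : rel 'I_n) : Prop :=
  (forall x y, e x y = e y x) /\ (forall x, e x x = false).

Fixpoint walk_len (n : nat) (x : 'I_n) (s : seq 'I_n) : R :=
  match s with
  | [::] => 0
  | y :: s' => eucl (circ_pt x) (circ_pt y) + walk_len y s'
  end.

Definition is_spanner (n : nat) (e : rel 'I_n) (t : R) : Prop :=
  forall x y : 'I_n, x <> y ->
    exists s : seq 'I_n,
      path e x s /\ last x s = y /\
      walk_len x s <= t * eucl (circ_pt x) (circ_pt y).

Definition is_tree (m : nat) (te : rel 'I_m.+1) : Prop :=
  (forall a b, te a b = te b a) /\ (forall a, te a a = false) /\
  (forall a b, connect te a b) /\
  (forall c : seq 'I_m.+1, (3 <= size c)%N -> ~~ ucycleb te c).

Definition has_tree_decomposition (n : nat) (e : rel 'I_n) (k : nat) : Prop :=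
  exists (m : nat) (te : rel 'I_m.+1) (bag : 'I_m.+1 -> {set 'I_n}),
    is_tree te /\
    (forall v : 'I_n, exists i, v \in bag i) /\
    (forall u v : 'I_n, e u v -> exists i, (u \in bag i) && (v \in bag i)) /\
    (forall (v : 'I_n) (i j : 'I_m.+1), v \in bag i -> v \in bag j ->
        connect [rel a b | [&& te a b, v \in bag a & v \in bag b]] i j) /\
    (forall i, (#|bag i| <= k.+1)%N).

Definition treewidth_eq (n : nat) (e : rel 'I_n) (k : nat) : Prop :=
  has_tree_decomposition e k /\
  (forall k', (k' < k)%N -> ~ has_tree_decomposition e k').

Definition on_segment (p q z : pt) : Prop :=
  exists lam : R, 0 <= lam <= 1 /\
    z = ((1 - lam) * fst p + lam * fst q, (1 - lam) * snd p + lam * snd q).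

Definition is_plane (n : nat) (e : rel 'I_n) : Prop :=
  forall a b c d : 'I_n, e a b -> e c d ->
    ~ ((a = c /\ b = d) \/ (a = d /\ b = c)) ->
    forall z : pt,
      on_segment (circ_pt a) (circ_pt b) z ->
      on_segment (circ_pt c) (circ_pt d) z ->
      (z = circ_pt a \/ z = circ_pt b) /\ (z = circ_pt c \/ z = circ_pt d).

(* Main.v *)
Require Import Defs.
From Stdlib Require Import Reals Lra Classical.
From Stdlib Require Nsatz.
From mathcomp Require Import all_boot zify.
Set Implicit Arguments. Unset Strict Implicit. Unset Printing Implicit Defensive.

Module CrossIdM.
Import Nsatz.
Local Open Scope R_scope.
Lemma cross_id (x d c : R) :
  (cos (2*d) - cos (2*c)) * (sin (2*x) - sin (2*c)) - (sin (2*d) - sin (2*c)) * (cos (2*x) - cos (2*c))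
  = 4 * sin (x - d) * sin (d - c) * sin (x - c).
Proof.
repeat rewrite sin_minus; repeat rewrite sin_2a; repeat rewrite cos_2a.
have Hx := sin2_cos2 x. have Hd := sin2_cos2 d. have Hc := sin2_cos2 c.
rewrite /Rsqr in Hx Hd Hc.
nsatz.
Qed.
End CrossIdM.


Section Trig.
Local Open Scope R_scope.

Definition ang (n k : nat) : R := PI * INR k / INR n.

Lemma circ_ang (n : nat) (k : 'I_n) :
  circ_pt k = (cos (2 * ang n k), sin (2 * ang n k)).
Proof. rewrite /circ_pt /ang. by do 2 f_equal; rewrite /Rdiv; ring. Qed.

Lemma dist_id (a b : R) :
  (cos (2*a) - cos (2*b))^2 + (sin (2*a) - sin (2*b))^2 = 4 * (sin (a - b))^2.
Proof.
have E: 2*a - 2*b = 2*(a-b) by ring.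
have HA := sin2_cos2 (2*a). have HB := sin2_cos2 (2*b).
have HC := cos_minus (2*a) (2*b).
have HD := cos_2a_sin (a-b).
rewrite E in HC. rewrite /Rsqr in HA HB HD. nra.
Qed.



Lemma eucl_circ (n : nat) (a b : 'I_n) :
  eucl (circ_pt a) (circ_pt b) = 2 * Rabs (sin (ang n a - ang n b)).
Proof.
rewrite /eucl !circ_ang /= dist_id.
have -> : 4 * sin (ang n a - ang n b) ^ 2 = Rsqr (2 * sin (ang n a - ang n b))
  by rewrite /Rsqr; ring.
by rewrite sqrt_Rsqr_abs Rabs_mult Rabs_pos_eq; lra.
Qed.

Definition cross (p q r : pt) : R :=
  (fst q - fst p) * (snd r - snd p) - (snd q - snd p) * (fst r - fst p).

Lemma cross_circ (n : nat) (c d x : 'I_n) :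
  cross (circ_pt c) (circ_pt d) (circ_pt x) =
  4 * sin (ang n x - ang n d) * sin (ang n d - ang n c) * sin (ang n x - ang n c).
Proof. by rewrite /cross !circ_ang /= CrossIdM.cross_id. Qed.

Lemma ang_diff (n k k' : nat) : ang n k - ang n k' = PI * (INR k - INR k') / INR n.
Proof. rewrite /ang /Rdiv; ring. Qed.

Lemma sin_pos_diff (n k k' : nat) : (k < n)%N -> (k' < k)%N ->
  0 < sin (ang n k - ang n k').
Proof.
move=> /ltP Hkn /ltP Hk'k.
have Hn : 0 < INR n by apply: lt_0_INR; lia.
have H1 := lt_INR _ _ Hkn. have H2 := lt_INR _ _ Hk'k.
have H0 := pos_INR k'.
rewrite ang_diff. apply: sin_gt_0.
- apply: Rdiv_lt_0_compat => //. apply: Rmult_lt_0_compat; [exact: PI_RGT_0|lra].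
- apply: (Rmult_lt_reg_r (INR n)) => //.
  have -> : PI * (INR k - INR k') / INR n * INR n = PI * (INR k - INR k') by field; lra.
  have := PI_RGT_0. nra.
Qed.

Lemma sin_neg_diff (n k k' : nat) : (k' < n)%N -> (k < k')%N ->
  sin (ang n k - ang n k') < 0.
Proof.
move=> H1 H2. have := sin_pos_diff H1 H2.
have -> : ang n k - ang n k' = - (ang n k' - ang n k) by ring.
rewrite sin_neg. lra.
Qed.

Lemma sin_ge_min (n m : nat) : (0 < m)%N -> (m < n)%N ->
  sin (PI / INR n) <= sin (PI * INR m / INR n).
Proof.
move=> /ltP Hm /ltP Hmn.
have Hn : 0 < INR n by apply: lt_0_INR; lia.
have H1 := lt_INR _ _ Hmn. have H2 : 1 <= INR m by apply: (le_INR 1); lia.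
have Hnm : 1 <= INR n - INR m by rewrite -minus_INR; [apply: (le_INR 1)|]; lia.
have Hpi := PI_RGT_0.
have Ha : PI / INR n <= PI * INR m / INR n.
  apply: Rmult_le_compat_r; first by left; apply: Rinv_0_lt_compat.
  nra.
have Hb : PI / INR n <= PI / 2.
  apply: Rmult_le_compat_l; first lra.
  apply: Rinv_le_contravar; first lra.
  have : (2 <= n)%coq_nat by lia. move/le_INR. by rewrite /= ; lra.
have Hb0 : 0 <= PI / INR n by rewrite /Rdiv; apply: Rmult_le_pos; [lra|left; apply: Rinv_0_lt_compat; lra].
case: (Rle_lt_dec (PI * INR m / INR n) (PI / 2)) => Hc.
  apply: sin_incr_1; lra.
rewrite -(sin_PI_x (PI * INR m / INR n)).
have Ec : PI - PI * INR m / INR n = PI * (INR n - INR m) / INR n by field; lra.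
have Hd : PI / INR n <= PI * (INR n - INR m) / INR n.
  apply: Rmult_le_compat_r; first by left; apply: Rinv_0_lt_compat.
  nra.
apply: sin_incr_1; lra.
Qed.

End Trig.

Section Geo.
Local Open Scope R_scope.

Lemma abs_sin_diff (n : nat) (k k' : nat) : (k' < k)%N -> (k < n)%N ->
  Rabs (sin (ang n k - ang n k')) >= sin (PI / INR n) /\
  Rabs (sin (ang n k' - ang n k)) >= sin (PI / INR n).
Proof.
move=> H1 H2.
have Hp := sin_pos_diff H2 H1.
have E : ang n k - ang n k' = PI * INR (k - k') / INR n.
  rewrite ang_diff minus_INR //; apply/leP; lia.
have Hm := @sin_ge_min n (k - k') ltac:(lia) ltac:(lia).
rewrite -E in Hm.
have -> : ang n k' - ang n k = - (ang n k - ang n k') by ring.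
rewrite sin_neg Rabs_Ropp Rabs_pos_eq; lra.
Qed.

Lemma min_dist (n : nat) (a b : 'I_n) : a <> b ->
  2 * sin (PI / INR n) <= eucl (circ_pt a) (circ_pt b).
Proof.
move=> Hab. rewrite eucl_circ.
case: (ltngtP a b) => H.
- have [_ H2] := abs_sin_diff H (ltn_ord b). lra.
- have [H2 _] := abs_sin_diff H (ltn_ord a). lra.
- by case: Hab; apply: val_inj.
Qed.

Lemma side_dist (n : nat) (u v : 'I_n) :
  (v = u.+1 :> nat \/ (u = n.-1 :> nat /\ v = 0%N :> nat)) ->
  eucl (circ_pt u) (circ_pt v) <= 2 * sin (PI / INR n).
Proof.
have Hn : (0 < n)%N by case: n u v => [[]|].
have Hn' : 0 < INR n by apply: lt_0_INR; apply/ltP.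
have Hs : 0 <= sin (PI / INR n).
  have Hpi := PI_RGT_0.
  apply: sin_ge_0.
  - rewrite /Rdiv; apply: Rmult_le_pos; [lra|left; apply: Rinv_0_lt_compat; lra].
  - have H1 : 1 <= INR n by apply: (le_INR 1); apply/leP.
    apply: (Rmult_le_reg_r (INR n)) => //.
    have -> : PI / INR n * INR n = PI by field; lra.
    nra.
rewrite eucl_circ => -[Hv|[Hu Hv]].
- rewrite /ang Hv S_INR.
  have -> : PI * INR u / INR n - PI * (INR u + 1) / INR n = - (PI / INR n) by field; lra.
  rewrite sin_neg Rabs_Ropp. right. f_equal. apply: Rabs_pos_eq.
  exact: Hs.
- rewrite /ang Hv Hu /= Rmult_0_r /Rdiv Rmult_0_l Rminus_0_r.
  have -> : PI * INR n.-1 * / INR n = PI - PI / INR n.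
    have En : INR n = INR n.-1 + 1 by rewrite -S_INR prednK.
    have := pos_INR n.-1. rewrite En => ?. field. lra.
  rewrite sin_PI_x. right. f_equal. exact: Rabs_pos_eq.
Qed.

End Geo.

Section Side.
Local Open Scope R_scope.

Lemma walk_len_ge0 (n : nat) (x : 'I_n) (s : seq 'I_n) : 0 <= walk_len x s.
Proof.
elim: s x => [|y s IH] x /=; first lra.
have := sqrt_pos ((fst (circ_pt x) - fst (circ_pt y)) ^ 2 + (snd (circ_pt x) - snd (circ_pt y)) ^ 2).
have := IH y. rewrite /eucl. lra.
Qed.

Lemma sin_min_pos (n : nat) : (3 <= n)%N -> 0 < sin (PI / INR n).
Proof.
move=> Hn. have Hpi := PI_RGT_0.
have H1 : 3 <= INR n by have := le_INR 3 n (ltac:(apply/leP; done)); rewrite /=; lra.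
apply: sin_gt_0.
- rewrite /Rdiv; apply: Rmult_lt_0_compat; [lra| apply: Rinv_0_lt_compat; lra].
- apply: (Rmult_lt_reg_r (INR n)); first lra.
  have -> : PI / INR n * INR n = PI by field; lra.
  nra.
Qed.

Lemma side_edge (n : nat) (e : rel 'I_n) (t : R) :
  (3 <= n)%N -> simple_graph e -> t < 2 -> is_spanner e t ->
  forall u v : 'I_n, (v = u.+1 :> nat \/ (u = n.-1 :> nat /\ v = 0%N :> nat)) -> e u v.
Proof.
move=> Hn [Hsym Hirr] Ht Hsp u v Huv.
case E: (e u v) => //. exfalso.
have Hne : u <> v.
  move=> Euv; subst v; case: Huv => [|[]]; lia.
have [s [Hp [Hl Hw]]] := Hsp u v Hne.
have HS := sin_min_pos Hn.
have Hd1 := side_dist Huv.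
have Hd2 := min_dist Hne.
case: s Hp Hl Hw => [|y [|y' s]] /=.
- by move=> _ Hl; case: Hne.
- by rewrite andbT => Huy Hy; rewrite -Hy Huy in E.
- move=> /and3P [Huy Hyy' _] _ Hw.
  have Hneq1 : u <> y by move=> Eq; subst y; rewrite Hirr in Huy.
  have Hneq2 : y <> y' by move=> Eq; subst y'; rewrite Hirr in Hyy'.
  have D1 := min_dist Hneq1. have D2 := min_dist Hneq2.
  have W := walk_len_ge0 y' s.
  nra.
Qed.

End Side.

Definition remE (T : eqType) (te : rel T) (x y : T) : rel T :=
  [rel a b | te a b && ~~ (((a == x) && (b == y)) || ((a == y) && (b == x)))].

Lemma remE_sym (T : eqType) (te : rel T) x y :
  (forall a b, te a b = te b a) -> symmetric (remE te x y).
Proof.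
move=> Hs a b; rewrite /remE /= Hs; congr (_ && ~~ _).
by case: (a == x); case: (b == y); case: (a == y); case: (b == x).
Qed.

Lemma remE_swap (T : eqType) (te : rel T) x y : remE te x y =2 remE te y x.
Proof.
move=> a b; rewrite /remE /=; congr (_ && ~~ _); by rewrite orbC.
Qed.

Definition acyclic (T : finType) (te : rel T) :=
  forall c : seq T, (3 <= size c)%N -> ~~ ucycleb te c.

Lemma noloop (T : finType) (te : rel T) x y :
  acyclic te -> te x y -> x != y -> ~~ connect (remE te x y) y x.
Proof.
move=> Hac Hxy Hne; apply/negP => /connectP [p Hp Hl].
case: (shortenP Hp) Hl => p' Hp' Hu _ Hl.
case: p' Hp' Hu Hl => [|z [|z' p'']].
- by move=> _ _ /= E; rewrite E eqxx in Hne.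
- move=> Hp' _ /= E; subst z. move: Hp'. rewrite /= => /andP [H _]. move: H. rewrite /remE /= eqxx (negbTE Hne) /=.
  by rewrite eqxx orbT andbF.
- move=> Hp' Hu Hl.
  have := Hac [:: y, z, z' & p''] isT; rewrite /ucycleb.
  move/negP; apply; apply/andP; split; last by [].
  rewrite /cycle rcons_path; apply/andP; split; last by rewrite -Hl.
  move: Hp'; apply: sub_path => a b /andP [].
  by [].
Qed.

Lemma side_disj (T : finType) (te : rel T) x y z :
  (forall a b, te a b = te b a) -> acyclic te -> te x y -> x != y ->
  connect (remE te x y) y z -> connect (remE te y x) x z -> False.
Proof.
move=> Hs Hac Hxy Hne H1 H2.
rewrite (eq_connect (remE_swap te y x)) in H2.
have Hsym := sym_connect_sym (remE_sym x y Hs).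
rewrite Hsym in H2.
have := noloop Hac Hxy Hne. by rewrite (connect_trans H1 H2).
Qed.

Lemma side_exists (T : finType) (te : rel T) x z :
  connect te x z -> x != z ->
  exists y, te x y && connect (remE te x y) y z.
Proof.
move=> /connectP [p Hp Hl] Hne.
case: (shortenP Hp) Hl => p' Hp' Hu _ Hl.
case: p' Hp' Hu Hl => [|y q].
  by move=> _ _ /= E; rewrite E eqxx in Hne.
move=> /= /andP [Hxy Hq] Hu Hl. exists y; rewrite Hxy /=.
apply/connectP; exists q => //.
move: Hu => /andP [Hx _].
apply: (@sub_in_path _ (predC1 x)) Hq.
  move=> a b Ha Hb /= Hab; rewrite /remE /= Hab /=.
  move: Ha Hb; rewrite !inE /= => /negbTE -> /negbTE ->.
  by rewrite andbF.
apply/allP => a Ha /=. apply: contra Hx => /eqP <-. exact: Ha.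
Qed.

Lemma tree_helly (T K : finType) (te : rel T) (N : K -> pred T) (x0 : T) :
  (forall a b, te a b = te b a) -> (forall a, te a a = false) ->
  (forall a b, connect te a b) -> acyclic te ->
  (forall k i j, N k i -> N k j -> connect [rel a b | te a b && N k a && N k b] i j) ->
  (forall k l, exists i, N k i && N l i) ->
  exists i, forall k, N k i.
Proof.
move=> Hs Hirr Hc Hac HN Hp.
case: (boolP [exists i, [forall k, N k i]]) => [/existsP [i /forallP H]|Hno].
  by exists i.
exfalso.
have Hmiss : forall x, exists k, ~~ N k x.
  move=> x; move: Hno; rewrite negb_exists => /forallP /(_ x).
  by rewrite negb_forall => /existsP.
have inside : forall x y k z w, ~~ N k x -> N k z -> N k w ->
    connect (remE te x y) y z -> connect (remE te x y) y w.
  move=> x y k z w Hx Hz Hw Hyz. apply: (connect_trans Hyz).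
  apply: (connect_sub _ (HN k z w Hz Hw)) => a b /= /andP [/andP [Hab Ha] Hb].
  apply: connect1; rewrite /remE /= Hab /=.
  have Hax : (a == x) = false by apply/negbTE; apply: contra Hx => /eqP <-.
  have Hbx : (b == x) = false by apply/negbTE; apply: contra Hx => /eqP <-.
  by rewrite Hax Hbx andbF.
pose P x y := te x y && [exists k, ~~ N k x && [exists z, N k z && connect (remE te x y) y z]].
have Pex : forall x, exists y, P x y.
  move=> x. have [k Hk] := Hmiss x. have [z /andP [Hz _]] := Hp k k.
  have Hxz : x != z by apply: contra Hk => /eqP ->.
  have [y /andP [Hxy Hyz]] := side_exists (Hc x z) Hxz.
  exists y; rewrite /P Hxy /=; apply/existsP; exists k; rewrite Hk /=.
  by apply/existsP; exists z; rewrite Hz.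
have Pnm : forall x y, P x y -> P y x -> False.
  move=> x y /andP [Hxy /existsP [k /andP [Hk /existsP [z /andP [Hz Hyz]]]]].
  move=> /andP [_ /existsP [l /andP [Hl /existsP [z' /andP [Hz' Hxz']]]]].
  have [w /andP [Hkw Hlw]] := Hp k l.
  have Hne : x != y by apply: contraTneq Hxy => ->; rewrite Hirr.
  apply: (side_disj Hs Hac Hxy Hne (inside _ _ _ _ _ Hk Hz Hkw Hyz)).
  exact: (inside _ _ _ _ _ Hl Hz' Hlw Hxz').
pose f x := odflt x [pick y | P x y].
have Hf : forall x, P x (f x).
  move=> x; rewrite /f; case: pickP => [y Hy|Hn] //=.
  by have [y Hy] := Pex x; rewrite Hn in Hy.
have Hte : forall x, te x (f x) by move=> x; case/andP: (Hf x).
have Hloop : exists q, looping f x0 q.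
  exists #|T|; apply/negPn; rewrite -looping_uniq; apply/negP => /card_uniqP.
  rewrite size_traject => E. have := max_card (mem (traject f x0 #|T|.+1)).
  by rewrite E ltnn.
case: (ex_minnP Hloop) => q Hq Hmin.
case: q Hq Hmin => [|q'] Hq Hmin; first by [].
have Hu : uniq (traject f x0 q'.+1).
  rewrite looping_uniq; apply/negP => /Hmin; by rewrite ltnn.
move: (Hq); rewrite /looping => /trajectP [i Hi Ei].
set y := iter i f x0 in Ei.
have Hr : q'.+1 = i + (q'.+1 - i) by lia.
set r := q'.+1 - i in Hr.
move: Hu; rewrite Hr trajectD cat_uniq => /and3P [_ _ Hu].
have Hyr : iter r f y = y by rewrite /y -iterD addnC -Hr.
have Hr0 : (0 < r)%N by rewrite /r subn_gt0.
have Hr3 : (3 <= r)%N.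
  case: r Hyr Hr0 {Hu Hr} => [|[|[|r']]] //= Hyr _.
  - by have := Hte y; rewrite Hyr Hirr.
  - have := Hf (f y); rewrite Hyr => H. by exfalso; apply: (Pnm _ _ (Hf y) H).
have := Hac (traject f y r); rewrite size_traject => /(_ Hr3).
rewrite /ucycleb Hu andbT; apply/negP/negPn.
case: r Hyr Hr3 {Hr Hu Hr0} => [|r'] //= Hyr _.
rewrite rcons_path; apply/andP; split.
  apply: (sub_path _ (fpath_traject f y r')) => a b /= /eqP <-; exact: Hte.
by rewrite last_traject -{2}Hyr Hte.
Qed.

Definition clsn (W X Y Z v : nat) : nat :=
  if (v < W)%N then 3 else if (v < X)%N then 0 else if (v < Y)%N then 1
  else if (v < Z)%N then 2 else 3.

Lemma clsn_lt4 W X Y Z v : (clsn W X Y Z v < 4)%N.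
Proof. rewrite /clsn; by repeat case: ifP. Qed.

Lemma clsn_between W X Y Z u v u' : (W < X < Y)%N -> (Y < Z)%N ->
  (u <= v <= u')%N -> clsn W X Y Z u = clsn W X Y Z u' ->
  ~ ((u < W)%N /\ (Z <= u')%N) -> clsn W X Y Z v = clsn W X Y Z u.
Proof.
move=> H1 H2 H3 H4 H5; move: H4; rewrite /clsn.
repeat case: ifP; lia.
Qed.

Definition sideH (n : nat) (e : rel 'I_n) :=
  forall u v : 'I_n, (v = u.+1 :> nat \/ (u = n.-1 :> nat /\ v = 0%N :> nat)) -> e u v.

Lemma interval_conn (n : nat) (e : rel 'I_n) (P : pred 'I_n) (u u' : 'I_n) :
  sideH e -> (u <= u')%N -> (forall v : 'I_n, (u <= v <= u')%N -> P v) ->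
  connect [rel a b | e a b && P a && P b] u u'.
Proof.
move=> Hs Huu' HP.
move Ed: (u' - u)%N => d.
elim: d u' Huu' HP Ed => [|d IH] u' Huu' HP Ed.
  have -> : u' = u by apply: val_inj; rewrite /=; lia.
  exact: connect0.
have Hlt : (u'.-1 < n)%N by apply: leq_ltn_trans (leq_pred u') (ltn_ord u').
pose v := Ordinal Hlt.
have Hv : (u <= v)%N by rewrite /=; lia.
apply: (connect_trans (IH v Hv _ _)).
- move=> w Hw; apply: HP; rewrite /= in Hw; lia.
- rewrite /=; lia.
apply: connect1 => /=.
rewrite Hs; last by left; rewrite /=; lia.
by rewrite !HP //=; lia.
Qed.

Definition eS (n : nat) (e : rel 'I_n) (c : 'I_n -> nat) (k : nat) : rel 'I_n :=
  [rel a b | e a b && (c a == k) && (c b == k)].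

Lemma class_conn (n : nat) (e : rel 'I_n) (W X Y Z : 'I_n) :
  (forall a b, e a b = e b a) -> sideH e -> (W < X < Y)%N -> (Y < Z)%N ->
  forall u u' : 'I_n, clsn W X Y Z u = clsn W X Y Z u' ->
  connect (eS e (fun v : 'I_n => clsn W X Y Z v) (clsn W X Y Z u)) u u'.
Proof.
move=> Hsym Hs H1 H2.
set c := fun v : 'I_n => clsn W X Y Z v.
have Hssym : forall k, connect_sym (eS e c k).
  move=> k; apply: sym_connect_sym => a b; rewrite /eS /= Hsym.
  by case: (c a == k); case: (c b == k); rewrite ?andbF ?andbT.
move=> u u'.
wlog: u u' / (u <= u')%N.
  move=> Hw E; case: (leqP u u') => Hle; first exact: Hw.
  rewrite Hssym E; apply: Hw; [exact: ltnW | by []].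
move=> Hle E.
have Zn : (Z < n)%N := ltn_ord Z.
case: (boolP ((u < W)%N && (Z <= u')%N)) => [/andP [HuW HZu']|Hno].
  have H0 : (0 < n)%N by lia.
  pose o0 := Ordinal H0.
  have Hn1 : (n.-1 < n)%N by lia.
  pose on1 := Ordinal Hn1.
  have Cu : c u = 3 by rewrite /c /clsn HuW.
  have Cu' : c u' = 3 by rewrite /c -E.
  apply: (@connect_trans _ _ o0).
    rewrite Hssym. apply: (@interval_conn n e (fun v => c v == c u) o0 u Hs) => //.
    move=> v /= Hv. rewrite Cu /c /clsn; case: ifP => //; lia.
  apply: (@connect_trans _ _ on1).
    apply: connect1; rewrite /eS /= Hsym Hs; last by right; rewrite /=; split.
    rewrite -/(c u) Cu /c /clsn /=.
    by repeat case: ifP; lia.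
  rewrite Hssym; apply: (@interval_conn n e (fun v => c v == c u) u' on1 Hs) => /=; first by have := ltn_ord u'; lia.
  move=> v /= Hv. rewrite Cu /c /clsn; repeat case: ifP => //; lia.
apply: (@interval_conn n e (fun v => c v == c u) u u' Hs) => // v Hv /=.
apply/eqP; apply: (clsn_between H1 H2 (u := u) (u' := u')) => //.
by move=> [A B]; move: Hno; rewrite A B.
Qed.

Definition pred_ord (n : nat) (u : 'I_n) : 'I_n :=
  Ordinal (leq_ltn_trans (leq_pred u) (ltn_ord u)).

Ltac cl := rewrite /clsn /=; repeat case: ifP; lia.

Lemma adj0 (n : nat) (e : rel 'I_n) (W X Y Z : 'I_n) :
  (forall a b, e a b = e b a) -> sideH e -> (W < X < Y)%N -> (Y < Z)%N ->
  e W Y -> e X Z ->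
  forall k l : nat, (k <= l)%N -> (l < 4)%N ->
  exists u v : 'I_n, clsn W X Y Z u = k /\ clsn W X Y Z v = l /\ (u = v \/ e u v).
Proof.
move=> Hsym Hs H1 H2 eWY eXZ.
have Zn := ltn_ord Z.
have sp : forall u : 'I_n, (0 < u)%N -> e (pred_ord u) u.
  move=> u Hu; apply: Hs; left; rewrite /=; lia.
have cW : clsn W X Y Z W = 0 by cl.
have cX : clsn W X Y Z X = 1 by cl.
have cY : clsn W X Y Z Y = 2 by cl.
have cZ : clsn W X Y Z Z = 3 by cl.
case=> [|[|[|[|k]]]]; case=> [|[|[|[|l]]]] //= _ _.
- by exists W, W; split; [|split; [|left]].
- exists (pred_ord X), X; split; [cl|split; [by []|right; apply: sp; lia]].
- by exists W, Y; split; [|split; [|right]].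
- case: (posnP W) => HW0.
  + have Hn1 : (n.-1 < n)%N by lia.
    exists W, (Ordinal Hn1); split; [by []|split; [cl|right]].
    rewrite Hsym; apply: Hs; right; split => //.
  + exists W, (pred_ord W); split; [by []|split; [cl|right]].
    rewrite Hsym; exact: sp.
- by exists X, X; split; [|split; [|left]].
- exists (pred_ord Y), Y; split; [cl|split; [by []|right; apply: sp; lia]].
- by exists X, Z; split; [|split; [|right]].
- by exists Y, Y; split; [|split; [|left]].
- exists (pred_ord Z), Z; split; [cl|split; [by []|right; apply: sp; lia]].
- by exists Z, Z; split; [|split; [|left]].
Qed.

Lemma no_td2 (n : nat) (e : rel 'I_n) (W X Y Z : 'I_n) :
  (forall a b, e a b = e b a) -> sideH e -> (W < X < Y)%N -> (Y < Z)%N ->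
  e W Y -> e X Z -> ~ has_tree_decomposition e 2.
Proof.
move=> Hsym Hs H1 H2 eWY eXZ.
move=> [m [te [bag [[Ts [Ti [Tc Ta]]] [Hcov [Hedge [Hbag Hsz]]]]]]].
set c := fun v : 'I_n => clsn W X Y Z v.
pose N (k : 'I_4) (i : 'I_m.+1) := [exists v, (v \in bag i) && (c v == k)].
have HN : forall k i j, N k i -> N k j ->
    connect [rel a b | te a b && N k a && N k b] i j.
  move=> k i j /existsP [v /andP [Hvi /eqP Hv]] /existsP [v' /andP [Hvj /eqP Hv']].
  have base : forall w i j, c w = k -> w \in bag i -> w \in bag j ->
      connect [rel a b | te a b && N k a && N k b] i j.
    move=> w i0 j0 Hw Hi0 Hj0.
    apply: (connect_sub _ (Hbag w i0 j0 Hi0 Hj0)) => a b /= /and3P [Hab Ha Hb].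
    apply: connect1; rewrite /= Hab /=.
    by apply/andP; split; apply/existsP; exists w; rewrite ?Ha ?Hb Hw eqxx.
  have Hcc := class_conn Hsym Hs H1 H2 (u := v) (u' := v').
  have := Hcc ltac:(by rewrite -/(c v) -/(c v') Hv Hv').
  rewrite -/(c v) Hv => /connectP [p Hp Hl].
  elim: p v i Hp Hl Hv Hvi {Hcc} => [|v1 p IH] v i Hp Hl Hv Hvi.
    rewrite /= in Hl; subst v'. exact: base Hv Hvi Hvj.
  move: Hp => /= /andP [/andP [/andP [Hvv1 _] /eqP Hv1] Hp].
  have [l /andP [Hvl Hv1l]] := Hedge v v1 Hvv1.
  apply: (connect_trans (base v i l Hv Hvi Hvl)).
  exact: (IH v1 l Hp Hl Hv1 Hv1l).
have Hpair : forall k l : 'I_4, exists i, N k i && N l i.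
  have gen : forall k l : 'I_4, (k <= l)%N -> exists i, N k i && N l i.
    move=> k l Hkl.
    have [u [v [Hu [Hv Huv]]]] := adj0 Hsym Hs H1 H2 eWY eXZ Hkl (ltn_ord l).
    have [i Hi] : exists i, (u \in bag i) && (v \in bag i).
      case: Huv => [<-|/Hedge //]. have [i Hi] := Hcov u. by exists i; rewrite Hi.
    exists i; move: Hi => /andP [Hui Hvi].
    by apply/andP; split; apply/existsP; [exists u; rewrite Hui; apply/eqP; exact: Hu | exists v; rewrite Hvi; apply/eqP; exact: Hv].
  move=> k l; case: (leqP k l) => Hkl; first exact: gen.
  have [i Hi] := gen l k (ltnW Hkl). by exists i; rewrite andbC.
have [i Hi] := tree_helly ord0 Ts Ti Tc Ta HN Hpair.
pose g := fun v : 'I_n => (inord (c v) : 'I_4).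
have Hsub : [set: 'I_4] \subset g @: bag i.
  apply/subsetP => k _. have /existsP [v /andP [Hv /eqP Hk]] := Hi k.
  apply/imsetP; exists v => //. by rewrite /g Hk inord_val.
have := subset_leq_card Hsub. rewrite cardsT card_ord => H4.
have := leq_trans (leq_trans H4 (leq_imset_card g (bag i))) (Hsz i).
by [].
Qed.

Section Cross.
Local Open Scope R_scope.

Definition sd (n : nat) (k k' : 'I_n) : R := sin (ang n k - ang n k').

Lemma sd_pos (n : nat) (k k' : 'I_n) : (k' < k)%N -> 0 < sd k k'.
Proof. move=> H; exact: sin_pos_diff (ltn_ord k) H. Qed.

Lemma sd_neg (n : nat) (k k' : 'I_n) : (k < k')%N -> sd k k' < 0.
Proof. move=> H; exact: sin_neg_diff (ltn_ord k') H. Qed.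

Lemma sd_nz (n : nat) (k k' : 'I_n) : k <> k' -> sd k k' <> 0.
Proof.
move=> H. case: (ltngtP k k') => Hk.
- have := sd_neg Hk; lra.
- have := sd_pos Hk; lra.
- by case: H; apply: val_inj.
Qed.

Lemma sd_0 (n : nat) (k : 'I_n) : sd k k = 0.
Proof. by rewrite /sd Rminus_diag sin_0. Qed.

Definition betw (n : nat) (a c d : 'I_n) : bool :=
  ((c < a) && (a < d))%N || ((d < a) && (a < c))%N.

Lemma prod_sign (n : nat) (a c d : 'I_n) : a <> c -> a <> d ->
  (betw a c d -> sd a d * sd a c < 0) /\ (~~ betw a c d -> 0 < sd a d * sd a c).
Proof.
move=> Hac Had. rewrite /betw.
have Hac' : (a : nat) <> c by move=> E; apply: Hac; apply: val_inj.
have Had' : (a : nat) <> d by move=> E; apply: Had; apply: val_inj.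
split.
- move=> /orP [/andP [h1 h2] | /andP [h1 h2]].
  + have := sd_pos h1; have := sd_neg h2; nra.
  + have := sd_pos h1; have := sd_neg h2; nra.
- move=> Hb.
  case: (ltngtP a c) => H1; last by [].
  + case: (ltngtP a d) => H2; last by [].
    * have := sd_neg H1; have := sd_neg H2; nra.
    * by move: Hb; rewrite H1 H2 /= orbT.
  + case: (ltngtP a d) => H2; last by [].
    * by move: Hb; rewrite H1 H2.
    * have := sd_pos H1; have := sd_pos H2; nra.
Qed.

End Cross.

Section Cross2.
Local Open Scope R_scope.

Lemma cross_lin (p q r s : pt) lam :
  cross r s ((1 - lam) * fst p + lam * fst q, (1 - lam) * snd p + lam * snd q)
  = (1 - lam) * cross r s p + lam * cross r s q.
Proof. rewrite /cross /=; ring. Qed.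

Lemma cross_on (r s : pt) mu :
  cross r s ((1 - mu) * fst r + mu * fst s, (1 - mu) * snd r + mu * snd s) = 0.
Proof. rewrite /cross /=; ring. Qed.

Lemma seg0 (p q : pt) : ((1 - 0) * fst p + 0 * fst q, (1 - 0) * snd p + 0 * snd q) = p.
Proof. case: p => x y /=; f_equal; ring. Qed.

Lemma seg1 (p q : pt) : ((1 - 1) * fst p + 1 * fst q, (1 - 1) * snd p + 1 * snd q) = q.
Proof. case: q => x y /=; f_equal; ring. Qed.

Lemma crossing_comb (n : nat) (a b c d : 'I_n) (z : pt) :
  a <> b -> c <> d -> ~ ((a = c /\ b = d) \/ (a = d /\ b = c)) ->
  on_segment (circ_pt a) (circ_pt b) z -> on_segment (circ_pt c) (circ_pt d) z ->
  ~ ((z = circ_pt a \/ z = circ_pt b) /\ (z = circ_pt c \/ z = circ_pt d)) ->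
  [/\ a <> c, a <> d, b <> c, b <> d & betw a c d != betw b c d].
Proof.
move=> Hab Hcd Hne [lam [Hl Ez]] [mu [Hm Ez']] Hnc.
have K : (1 - lam) * cross (circ_pt c) (circ_pt d) (circ_pt a)
       + lam * cross (circ_pt c) (circ_pt d) (circ_pt b) = 0.
  by rewrite -cross_lin -Ez Ez' cross_on.
rewrite !cross_circ -!/(sd _ _) in K.
have Lz : forall x y w : 'I_n, x <> y -> y <> w -> x <> w -> 4 * sd x y * sd y w * sd x w <> 0.
  move=> x y w H1 H2 H3.
  have := sd_nz H1; have := sd_nz H2; have := sd_nz H3.
  move=> A B C.
  apply: Rmult_integral_contrapositive_currified => //.
  apply: Rmult_integral_contrapositive_currified => //.
  apply: Rmult_integral_contrapositive_currified; [lra|assumption].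
have Ha0 : lam = 0 -> z = circ_pt a by move=> E; rewrite Ez E seg0.
have Hb1 : lam = 1 -> z = circ_pt b by move=> E; rewrite Ez E seg1.
have Hba : b <> a by move=> E; apply: Hab.
have Hdc : d <> c by move=> E; apply: Hcd.
case: (eqVneq a c) => [Eac|Nac].
  subst c. exfalso.
  have {}K : lam * (4 * sd b d * sd d a * sd b a) = 0 by rewrite -K sd_0; ring.
  have Hbd : b <> d by move=> E; apply: Hne; left.
  case: (Rmult_integral _ _ K) => [E|E]; last by apply: (Lz b d a).
  apply: Hnc; split; [left|left]; exact: Ha0.
case: (eqVneq a d) => [Ead|Nad].
  subst d. exfalso.
  have {}K : lam * (4 * sd b a * sd a c * sd b c) = 0 by rewrite -K sd_0; ring.
  have Hbc : b <> c by move=> E; apply: Hne; right.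
  case: (Rmult_integral _ _ K) => [E|E]; last by apply: (Lz b a c).
  apply: Hnc; split; [left|right]; exact: Ha0.
have Nac' : a <> c by apply/eqP.
have Nad' : a <> d by apply/eqP.
case: (eqVneq b c) => [Ebc|Nbc].
  subst c. exfalso.
  have {}K : (1 - lam) * (4 * sd a d * sd d b * sd a b) = 0 by rewrite -K sd_0; ring.
  case: (Rmult_integral _ _ K) => [E|E]; last by apply: (Lz a d b).
  apply: Hnc; split; [right|left]; apply: Hb1; lra.
case: (eqVneq b d) => [Ebd|Nbd].
  subst d. exfalso.
  have {}K : (1 - lam) * (4 * sd a b * sd b c * sd a c) = 0 by rewrite -K sd_0; ring.
  case: (Rmult_integral _ _ K) => [E|E]; last by apply: (Lz a b c).
  apply: Hnc; split; [right|right]; apply: Hb1; lra.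
have Nbc' : b <> c by apply/eqP.
have Nbd' : b <> d by apply/eqP.
split => //.
have LA := Lz a d c Nad' Hdc Nac'.
have LB := Lz b d c Nbd' Hdc Nbc'.
set LAv := 4 * sd a d * sd d c * sd a c in K LA.
set LBv := 4 * sd b d * sd d c * sd b c in K LB.
have Hneg : LAv * LBv < 0.
  case: (Rlt_le_dec (LAv * LBv) 0) => // Hp. exfalso.
  have H1 : (1 - lam) * (LAv * LAv) + lam * (LAv * LBv) = 0.
    have -> : (1 - lam) * (LAv * LAv) + lam * (LAv * LBv) = LAv * ((1 - lam) * LAv + lam * LBv) by ring.
    by rewrite K Rmult_0_r.
  have H2 : 0 < LAv * LAv by nra.
  have H3 : 1 - lam = 0 by nra.
  have H4 : lam = 1 by lra.
  rewrite H4 in K. apply: LB. lra.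
have Hprod : LAv * LBv = 16 * (sd d c * sd d c) * ((sd a d * sd a c) * (sd b d * sd b c)).
  rewrite /LAv /LBv; ring.
have Hdc2 : 0 < sd d c * sd d c by have := sd_nz Hdc; nra.
have [PA1 PA2] := prod_sign Nac' Nad'.
have [PB1 PB2] := prod_sign Nbc' Nbd'.
case: (betw a c d) PA1 PA2 => PA1 PA2; case: (betw b c d) PB1 PB2 => PB1 PB2 //=; exfalso.
- have := PA1 isT; have := PB1 isT => X1 X2.
  have P : 0 < (sd a d * sd a c) * (sd b d * sd b c) by nra.
  have : 0 < 16 * (sd d c * sd d c) * ((sd a d * sd a c) * (sd b d * sd b c)).
    apply: Rmult_lt_0_compat => //; lra.
  lra.
- have := PA2 isT; have := PB2 isT => X1 X2.
  have P : 0 < (sd a d * sd a c) * (sd b d * sd b c) by nra.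
  have : 0 < 16 * (sd d c * sd d c) * ((sd a d * sd a c) * (sd b d * sd b c)).
    apply: Rmult_lt_0_compat => //; lra.
  lra.
Qed.


End Cross2.

Lemma inter0 (n : nat) (e : rel 'I_n) (a b c d : 'I_n) :
  (forall x y, e x y = e y x) -> e a b -> e c d ->
  (c < a)%N -> (a < d)%N -> b <> c -> b <> d -> ~~ ((c < b) && (b < d))%N ->
  exists W X Y Z : 'I_n, [/\ (W < X < Y)%N, (Y < Z)%N, e W Y & e X Z].
Proof.
move=> Hs eab ecd H1 H2 Hbc Hbd Hb.
have Hbc' : (b : nat) <> c by move=> E; apply: Hbc; apply: val_inj.
have Hbd' : (b : nat) <> d by move=> E; apply: Hbd; apply: val_inj.
case: (ltnP b c) => H3.
  exists b, c, a, d; split => //; [lia | by rewrite Hs].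
have H4 : (d < b)%N by move: Hb; rewrite negb_and -!leqNgt; lia.
by exists c, a, d, b; split => //; lia.
Qed.

Lemma interleave (n : nat) (e : rel 'I_n) (a b c d : 'I_n) :
  (forall x y, e x y = e y x) -> e a b -> e c d ->
  a <> c -> a <> d -> b <> c -> b <> d -> betw a c d != betw b c d ->
  exists W X Y Z : 'I_n, [/\ (W < X < Y)%N, (Y < Z)%N, e W Y & e X Z].
Proof.
move=> Hs eab ecd Hac Had Hbc Hbd.
rewrite /betw.
case: (ltngtP c d) => Hcd.
- have F1 : forall x : 'I_n, ((d < x) && (x < c))%N = false.
    by move=> x; apply/negbTE; rewrite negb_and -!leqNgt; lia.
  rewrite !F1 !orbF.
  case Ea: ((c < a) && (a < d))%N; case Eb: ((c < b) && (b < d))%N => //= _.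
  + move/andP: Ea => [A1 A2]. apply: (inter0 Hs eab ecd A1 A2) => //; by rewrite ?Ea ?Eb.
  + move/andP: Eb => [A1 A2]. rewrite Hs in eab.
    apply: (inter0 Hs eab ecd A1 A2) => //; by rewrite ?Ea ?Eb.
- have F1 : forall x : 'I_n, ((c < x) && (x < d))%N = false.
    by move=> x; apply/negbTE; rewrite negb_and -!leqNgt; lia.
  rewrite !F1 /=. rewrite Hs in ecd.
  case Ea: ((d < a) && (a < c))%N; case Eb: ((d < b) && (b < c))%N => //= _.
  + move/andP: Ea => [A1 A2]. apply: (inter0 Hs eab ecd A1 A2) => //; by rewrite ?Ea ?Eb.
  + move/andP: Eb => [A1 A2]. rewrite Hs in eab.
    apply: (inter0 Hs eab ecd A1 A2) => //; by rewrite ?Ea ?Eb.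
- have E : c = d by apply: val_inj.
  subst d. have F1 : forall x : 'I_n, ((c < x) && (x < c))%N = false.
    by move=> x; apply/negbTE; rewrite negb_and -!leqNgt; lia.
  by rewrite !F1.
Qed.


Theorem lemma27 (n : nat) (e : rel 'I_n) (t : R) :
  (3 <= n)%N -> simple_graph e -> Rlt t 2 ->
  is_spanner e t -> treewidth_eq e 2 -> is_plane e.
Proof.
move=> Hn Hsg Ht Hsp [Htd _].
have Hside : sideH e by move=> u v H; exact: side_edge Hn Hsg Ht Hsp u v H.
have [Hsym Hirr] := Hsg.
move=> a b c d eab ecd Hne z Hz1 Hz2.
case: (classic ((z = circ_pt a \/ z = circ_pt b) /\ (z = circ_pt c \/ z = circ_pt d))) => // Hnc.
exfalso.
have Hab : a <> b by move=> E; subst b; rewrite Hirr in eab.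
have Hcd : c <> d by move=> E; subst d; rewrite Hirr in ecd.
have [Hac Had Hbc Hbd Hx] := crossing_comb Hab Hcd Hne Hz1 Hz2 Hnc.
have [W [X [Y [Z [H1 H2 H3 H4]]]]] := interleave Hsym eab ecd Hac Had Hbc Hbd Hx.
exact: (no_td2 Hsym Hside H1 H2 H3 H4 Htd).
Qed.
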